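(* Let $f: M\to N$ be a homomorphism of magmas. Then the image $f(M)$ is equidecomposable if and only if $\ker f=\{(x,y)\in M^2 : f(x)=f(y)\}$ is a closed submagma of $M^2$.
   Context: A magma is a set with a binary operation $+$; a homomorphism satisfies $f(x+y)=f(x)+f(y)$. A magma is equidecomposable if $x+y=x'+y'$ implies $x=x'$ and $y=y'$. $M^2=M\times M$ has the componentwise operation $(x,y)+(x',y')=(x+x',y+y')$. A subset $X$ of a magma is closed if $u+v\in X$ implies $u,v\in X$. *)

(* Defs.v *)
Definition submagma {T : Type} (op : T -> T -> T) (S : T -> Prop) : Prop :=
  forall u v, S u -> S v -> S (op u v).

Definition closed_subset {T : Type} (op : T -> T -> T) (X : T -> Prop) : Prop :=
  forall u v, X (op u v) -> X u /\ X v.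

Definition equidecomposable {T : Type} (op : T -> T -> T) (S : T -> Prop) : Prop :=
  forall x y x' y', S x -> S y -> S x' -> S y' ->
    op x y = op x' y' -> x = x' /\ y = y'.

Definition is_hom {M N : Type} (opM : M -> M -> M) (opN : N -> N -> N)
  (f : M -> N) : Prop :=
  forall x y, f (opM x y) = opN (f x) (f y).

Definition op2 {M : Type} (op : M -> M -> M) (p q : M * M) : M * M :=
  (op (fst p) (fst q), op (snd p) (snd q)).

Definition image {M N : Type} (f : M -> N) : N -> Prop :=
  fun n => exists x, f x = n.

Definition kernel {M N : Type} (f : M -> N) : M * M -> Prop :=
  fun p => f (fst p) = f (snd p).

(* Main.v *)
Require Import Defs.

Theorem lemma6p3 (M N : Type) (opM : M -> M -> M) (opN : N -> N -> N)
  (f : M -> N) (hf : is_hom opM opN f) :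
  equidecomposable opN (image f) <->
  (submagma (op2 opM) (kernel f) /\ closed_subset (op2 opM) (kernel f)).
Proof.
  unfold equidecomposable, submagma, closed_subset, kernel, op2, image, is_hom in *.
  split.
  - intros E. split.
    + intros [u1 u2] [v1 v2]; simpl; intros H1 H2.
      rewrite !hf, H1, H2. reflexivity.
    + intros [u1 u2] [v1 v2]; simpl; intros H.
      rewrite !hf in H.
      apply E in H; eauto.
  - intros [_ C] a b a' b' [x <-] [y <-] [x' <-] [y' <-] H.
    rewrite <- !hf in H.
    specialize (C (x, x') (y, y')). simpl in C.
    exact (C H).
Qed.
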